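(* Let $X,Y$ be compact metric spaces, $\epsilon\ge0$, and $X_\epsilon,Y_\epsilon$ finite $\epsilon$-nets of $X$ and $Y$ respectively. Let $n=\min\{|X_\epsilon|,|Y_\epsilon|\}$. Then $d_{\mathrm{GH}}(X,Y)\le(2n-1)\widehat{d}_{\mathrm{GH}}(X,Y)+2n\epsilon$.
   Context: An $\epsilon$-net of $X$ is a subset such that every point of $X$ is within distance $\le\epsilon$ of it. For $f:X\to Y$, $\operatorname{dis}(f)=\sup_{x,x'}|d_X(x,x')-d_Y(f(x),f(x'))|$; $\operatorname{codis}(f,g)=\sup_{x,y}|d_X(x,g(y))-d_Y(f(x),y)|$. $d_{\mathrm{GH}}$ is the Gromov--Hausdorff distance, equal to $\frac12\inf_{f,g}\max\{\operatorname{dis}(f),\operatorname{dis}(g),\operatorname{codis}(f,g)\}$; $\widehat{d}_{\mathrm{GH}}(X,Y)=\frac12\max\{\inf_{f:X\to Y}\operatorname{dis}(f),\inf_{g:Y\to X}\operatorname{dis}(g)\}$. *)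

(* Defs.v *)
From Stdlib Require List.
From mathcomp Require Import all_boot all_order all_algebra.
From mathcomp Require Import all_classical all_reals all_analysis.
Set Implicit Arguments. Unset Strict Implicit. Unset Printing Implicit Defensive.
Import Order.TTheory GRing.Theory Num.Theory.
Local Open Scope classical_set_scope.
Local Open Scope ring_scope.

Definition is_metric (R : realType) (T : Type) (d : T -> T -> R) : Prop :=
  (forall x y, 0 <= d x y) /\
  (forall x y, d x y = 0 <-> x = y) /\
  (forall x y, d x y = d y x) /\
  (forall x y z, d x z <= d x y + d y z).

(* (T,d) is compact: every sequence has a convergent subsequence
   (equivalent to compactness for metric spaces). *)
Definition metric_compact (R : realType) (T : Type) (d : T -> T -> R) : Prop :=
  forall u : nat -> T, exists (phi : nat -> nat) (l : T),
    (forall m n, (m < n)%N -> (phi m < phi n)%N) /\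
    (forall e : R, 0 < e -> exists N, forall k, (N <= k)%N -> d (u (phi k)) l < e).

Definition is_eps_net (R : realType) (T : Type) (d : T -> T -> R) (eps : R)
  (s : seq T) : Prop :=
  forall x : T, exists a, List.In a s /\ d x a <= eps.

Local Open Scope ereal_scope.

Definition dis (R : realType) (X Y : Type) (dX : X -> X -> R) (dY : Y -> Y -> R)
  (f : X -> Y) : \bar R :=
  ereal_sup (range (fun p : X * X => (`| dX p.1 p.2 - dY (f p.1) (f p.2) |)%:E)).

Definition codis (R : realType) (X Y : Type) (dX : X -> X -> R) (dY : Y -> Y -> R)
  (f : X -> Y) (g : Y -> X) : \bar R :=
  ereal_sup (range (fun p : X * Y => (`| dX p.1 (g p.2) - dY (f p.1) p.2 |)%:E)).

Definition dGH (R : realType) (X Y : Type) (dX : X -> X -> R) (dY : Y -> Y -> R)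
  : \bar R :=
  (2^-1)%:E * ereal_inf (range (fun fg : (X -> Y) * (Y -> X) =>
     maxe (maxe (dis dX dY fg.1) (dis dY dX fg.2)) (codis dX dY fg.1 fg.2))).

Definition dGH_hat (R : realType) (X Y : Type) (dX : X -> X -> R) (dY : Y -> Y -> R)
  : \bar R :=
  (2^-1)%:E * maxe (ereal_inf (range (fun f : X -> Y => dis dX dY f)))
                   (ereal_inf (range (fun g : Y -> X => dis dY dX g))).

(* Main.v *)
Require Import Defs.
From Stdlib Require List.
From mathcomp Require Import all_boot all_order all_algebra.
From mathcomp Require Import all_classical all_reals all_analysis.
From mathcomp Require Import zify ring lra.
Import Order.TTheory GRing.Theory Num.Theory.
Local Open Scope classical_set_scope.
Local Open Scope ring_scope.

Local Open Scope nat_scope.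

Lemma in_nth_ex (T : Type) (s : seq T) (x : T) :
  List.In x s -> exists i : 'I_(size s), nth x s i = x.
Proof.
elim: s => [//|a s IH] /= [->|h].
  by exists (Ordinal (ltn0Sn (size s))).
have [i hi] := IH h.
have lt : (i.+1 < (size s).+1)%N by rewrite ltnS.
by exists (Ordinal lt).
Qed.

Lemma php (T : Type) (s : seq T) (u : nat -> T) (m : nat) :
  (forall k, (k < m)%N -> List.In (u k) s) ->
  (forall k l, (k < l)%N -> (l < m)%N -> u k <> u l) -> (m <= size s)%N.
Proof.
move=> hin hd.
case: m hin hd => [//|m] hin hd.
have hex : forall k : 'I_m.+1, exists i : 'I_(size s), nth (u 0%N) s i = u k.
  move=> k; have [i hi] := @in_nth_ex _ _ _ (hin k (ltn_ord k)).
  by exists i; rewrite -hi; apply: set_nth_default; apply: ltn_ord.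
have [idx hidx] := choice hex.
have inj : injective idx.
  move=> k l e; apply/val_inj => /=.
  have := hidx k; have := hidx l; rewrite e => -> ek.
  case: (ltngtP k l) => // c.
  - by case: (hd _ _ c (ltn_ord l)).
  - by case: (hd _ _ c (ltn_ord k)).
by have := leq_card idx inj; rewrite !card_ord.
Qed.

Lemma ex_min_prop {P : nat -> Prop} :
  (exists n, P n) -> exists n, P n /\ forall m, (m < n)%N -> ~ P m.
Proof.
move=> h.
have h' : exists n, `[< P n >] by case: h => n hn; exists n; exact/asboolP.
case: (ex_minnP h') => n /asboolP hn hmin.
exists n; split => // m hm /asboolP pm.
by have := hmin m pm; rewrite leqNgt hm.
Qed.

Definition spec (T : Type) (psi : T -> T) (z : T) (i p : nat) :=
  [/\ (1 <= p)%N, iter (i + p) psi z = iter i psi z &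
      forall a b, (a < b)%N -> (b < i + p)%N -> iter a psi z <> iter b psi z].
Arguments spec {T}.

Lemma spec_ex (T : Type) (s : seq T) (psi : T -> T)
  (cl : forall z, List.In z s -> List.In (psi z) s) z :
  List.In z s -> exists i p, spec psi z i p /\ (i + p <= size s)%N.
Proof.
move=> hz.
have inz : forall k, List.In (iter k psi z) s.
  by elim=> [//|k IH] /=; apply: cl.
have hex : exists j, exists i, (i < j)%N /\ iter i psi z = iter j psi z.
  apply: contrapT => hn.
  suff : (size s < size s)%N by rewrite ltnn.
  apply: (@php T s (fun k => iter k psi z) (size s).+1 (fun k _ => inz k)).
  by move=> k l kl _ e; apply: hn; exists l, k.
have [j [[i [ij e]] hmin]] := @ex_min_prop _ hex.
have hd : forall a b, (a < b)%N -> (b < j)%N -> iter a psi z <> iter b psi z.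
  by move=> a b ab bj eab; apply: (hmin b bj); exists a.
exists i, (j - i)%N.
rewrite /spec.
have -> : (i + (j - i) = j)%N by lia.
split; last by apply: (@php _ s (fun k => iter k psi z) j (fun k _ => inz k) hd).
by split; [lia | by rewrite e | done].
Qed.

Section Spec.
Variables (T : Type) (psi : T -> T) (z : T) (i p : nat).
Hypothesis hs : spec psi z i p.

Lemma spec_per c : (i <= c)%N -> iter (c + p) psi z = iter c psi z.
Proof.
case: hs => hp e _ ic.
have -> : (c + p = (c - i) + (i + p))%N by lia.
by rewrite iterD e -iterD; congr iter; lia.
Qed.

Lemma spec_perm t r : iter (i + r + t * p) psi z = iter (i + r) psi z.
Proof.
elim: t => [|t IH]; first by rewrite mul0n addn0.
by rewrite mulSn (addnC p) addnA spec_per ?IH //; lia.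
Qed.

Lemma spec_min c q : (1 <= q)%N -> iter c psi z = iter (c + q) psi z -> (p <= q)%N.
Proof.
move=> q1 e; rewrite leqNgt; apply/negP => qp.
case: (hs) => hp _ hd.
have e1 : iter (i + c) psi z = iter (i + c + q) psi z.
  by rewrite iterD e -iterD addnA.
have hdiv := divn_eq c p.
set t := (c %/ p)%N in hdiv; set r := (c %% p)%N in hdiv.
have rp : (r < p)%N by rewrite /r ltn_mod; lia.
have e2 : iter (i + r) psi z = iter (i + r + q) psi z.
  have := e1; rewrite hdiv.
  have -> : (i + (t * p + r) = i + r + t * p)%N by lia.
  have -> : (i + r + t * p + q = i + (r + q) + t * p)%N by lia.
  by rewrite !spec_perm addnA.
case: (ltnP (r + q) p) => rq.
  by apply: (hd (i + r) (i + r + q)) => //; lia.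
have e3 : iter (i + r + q) psi z = iter (i + (r + q - p)) psi z.
  have -> : (i + r + q = i + (r + q - p) + p)%N by lia.
  by apply: spec_per; lia.
by apply: (hd (i + (r + q - p)) (i + r)); [lia | lia | rewrite e2 e3].
Qed.

End Spec.

Lemma spec_pair (T : Type) (s : seq T) (psi : T -> T)
  (cl : forall z, List.In z s -> List.In (psi z) s) z z' i p i' p' :
  List.In z s -> List.In z' s ->
  spec psi z i p -> spec psi z' i' p' ->
  (i + p <= size s)%N -> (i' + p' <= size s)%N ->
  [\/ (i + i' + 2 <= size s)%N, (p = p' /\ p + 1 <= size s)%N | (i = 0 /\ i' = 0)%N].
Proof.
move=> hz hz' hs hs' b b'.
have inz : forall w k, List.In w s -> List.In (iter k psi w) s.
  by move=> w; elim=> [//|k IH] /= hw; apply: cl; apply: IH.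
case: (hs) => hp _ hd; case: (hs') => hp' _ hd'.
case: (pselect (exists a b, (a < i + p)%N /\ (b < i' + p')%N /\ iter a psi z = iter b psi z')) => hx.
  case: hx => a [c [ha [hc e]]].
  have ek : forall k, iter (k + a) psi z = iter (k + c) psi z'.
    by move=> k; rewrite !iterD e.
  have pp' : (p <= p')%N.
    apply: (@spec_min _ psi z i p hs (i' + a)%N p') => //.
    rewrite ek -(@spec_per _ psi z' i' p' hs' (i' + c)%N); last by lia.
    have -> : (i' + a + p' = (i' + p') + a)%N by lia.
    rewrite ek; congr iter; lia.
  have p'p : (p' <= p)%N.
    apply: (@spec_min _ psi z' i' p' hs' (i + c)%N p) => //.
    rewrite -ek -(@spec_per _ psi z i p hs (i + a)%N); last by lia.
    have -> : (i + c + p = (i + p) + c)%N by lia.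
    rewrite -ek; congr iter; lia.
  have epp : p = p' by apply/eqP; rewrite eqn_leq pp' p'p.
  case: (ltnP p (size s)) => hps.
    by apply: Or32; split => //; lia.
  by apply: Or33; lia.
apply: Or31.
have H : (i + p + (i' + p') <= size s)%N.
  apply: (@php T s (fun k => if (k < i + p)%N then iter k psi z else iter (k - (i + p)) psi z')
    ((i + p) + (i' + p'))).
    by move=> k _; case: ifP => _; apply: inz.
  move=> k l kl lm.
  case: ifP => hk; case: ifP => hl.
  - by apply: hd.
  - move=> e; apply: hx; exists k, (l - (i + p))%N; split => //; split => //; lia.
  - lia.
  - by apply: hd'; lia.
lia.
Qed.
Arguments spec_ex {T s psi} cl {z}.
Arguments spec_pair {T s psi} cl {z z' i p i' p'}.

Local Open Scope classical_set_scope.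
Local Open Scope ring_scope.

Lemma normP (R : realType) (a c : R) : `|a| <= c <-> (a <= c /\ - a <= c).
Proof. rewrite ler_norml; split => [/andP [h1 h2]|[h1 h2]]; [split; lra | apply/andP; split; lra]. Qed.

Lemma met_lip (R : realType) (T : Type) (d : T -> T -> R) (hd : is_metric d) a b a' b' :
  `|d a b - d a' b'| <= d a a' + d b b'.
Proof.
case: hd => _ [_ [hs ht]].
apply/normP; split.
- have := ht a a' b; have := ht a' b' b; rewrite (hs b' b); lra.
- have := ht a' a b'; have := ht a b b'; rewrite (hs a' a); lra.
Qed.

Arguments met_lip {R T d}.

Lemma met0 (R : realType) (T : Type) (d : T -> T -> R) (hd : is_metric d) a : d a a = 0.
Proof. by case: hd => _ [h _]; apply/h. Qed.
Arguments met0 {R T d}.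

Lemma core (R : realType) (X Y : Type) (dX : X -> X -> R) (dY : Y -> Y -> R)
  (hX : is_metric dX) (hY : is_metric dY) (eps : R) (heps : 0 <= eps)
  (sY : seq Y) (nY : is_eps_net dY eps sY) (y0 : Y)
  (f : X -> Y) (g : Y -> X) (A B : R)
  (hf : forall x x', `|dX x x' - dY (f x) (f x')| <= A)
  (hg : forall y y', `|dY y y' - dX (g y) (g y')| <= B) :
  exists (F : X -> Y) (G : Y -> X),
   (forall x x', `|dX x x' - dY (F x) (F x')| <= A + 4 * eps + ((size sY)%:R - 1) * (A + B + 2 * eps)) /\
   (forall y y', `|dY y y' - dX (G y) (G y')| <= A + 4 * eps + ((size sY)%:R - 1) * (A + B + 2 * eps)) /\
   (forall x y, `|dX x (G y) - dY (F x) y| <= A + 4 * eps + ((size sY)%:R - 1) * (A + B + 2 * eps)).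
Proof.
set n := size sY.
set delta := A + B + 2 * eps.
have [pr hpr] := choice nY.
have B0 : 0 <= B by have := hg y0 y0; rewrite !met0 // subrr normr0.
have A0 : 0 <= A by have := hf (g y0) (g y0); rewrite !met0 // subrr normr0.
have d0 : 0 <= delta by rewrite /delta; lra.
have n1 : (1 <= n)%N by case: (hpr y0) => h _; rewrite /n; case: (sY) h.
have hn : 1 <= n%:R :> R by rewrite ler1n.
have hpr2 : forall u v, `|dY u v - dY (pr u) (pr v)| <= 2 * eps.
  move=> u v; apply: (le_trans (met_lip hY _ _ _ _)).
  by case: (hpr u) => _ h1; case: (hpr v) => _ h2; lra.
set F := fun x => pr (f x).
have hF : forall x x', `|dX x x' - dY (F x) (F x')| <= A + 2 * eps.
  move=> x x'; have := hf x x'; have := hpr2 (f x) (f x').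
  rewrite /F !normP; lra.
set psi := fun y => pr (f (g y)).
have hpsi : forall u v, `|dY u v - dY (psi u) (psi v)| <= delta.
  move=> u v; have := hg u v; have := hF (g u) (g v).
  rewrite /F /psi /delta !normP; lra.
have hiter : forall k u v, `|dY u v - dY (iter k psi u) (iter k psi v)| <= k%:R * delta.
  elim=> [|k IH] u v /=; first by rewrite subrr normr0 mul0r.
  have := IH u v; have := hpsi (iter k psi u) (iter k psi v).
  rewrite -addn1 natrD mulrDl mul1r !normP; lra.
have cl : forall z, List.In z sY -> List.In (psi z) sY by move=> z _; case: (hpr (f (g z))).
have hsp : forall y, exists ip : nat * nat, spec psi (pr y) ip.1 ip.2 /\ (ip.1 + ip.2 <= n)%N.
  move=> y; have [i [p h]] := spec_ex cl (proj1 (hpr y)).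
  by exists (i, p).
have [ip hip] := choice hsp.
set G := fun y => g (iter (ip y).2.-1 psi (pr y)).
have FG : forall y, F (G y) = iter (ip y).2 psi (pr y).
  move=> y; case: (hip y) => [[p1 _ _] _].
  by rewrite /F /G -/(psi _) -iterS prednK.
have P1 : forall y, dY (pr y) (iter (ip y).2 psi (pr y)) <= (n%:R - 1) * delta.
  move=> y; case: (hip y) => [[p1 e _] b].
  have := hiter (ip y).1 (pr y) (iter (ip y).2 psi (pr y)).
  rewrite -iterD e met0 // subr0.
  move=> h; apply: (le_trans (ler_norm _)); apply: (le_trans h).
  apply: ler_wpM2r => //.
  have : ((ip y).1 + 1 <= n)%N by lia.
  by rewrite -(ler_nat R) natrD; lra.
have P2 : forall y y', `|dY (pr y) (pr y') - dY (iter (ip y).2 psi (pr y)) (iter (ip y').2 psi (pr y'))| <= (n%:R - 1) * delta.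
  move=> y y'.
  case: (hip y) => [hs b]; case: (hip y') => [hs' b'].
  case: (spec_pair cl (proj1 (hpr y)) (proj1 (hpr y')) hs hs' b b').
  - move=> hc.
    apply: (le_trans (met_lip hY _ _ _ _)).
    have := hiter (ip y).1 (pr y) (iter (ip y).2 psi (pr y)).
    have := hiter (ip y').1 (pr y') (iter (ip y').2 psi (pr y')).
    case: hs => [_ e _]; case: hs' => [_ e' _].
    rewrite -!iterD e e' !met0 // !subr0.
    move=> h1 h2.
    have h3 : ((ip y).1%:R + (ip y').1%:R) * delta <= (n%:R - 1) * delta.
      apply: ler_wpM2r => //.
      have : ((ip y).1 + (ip y').1 + 1 <= n)%N by lia.
      by rewrite -(ler_nat R) !natrD; lra.
    have := ler_norm (dY (pr y) (iter (ip y).2 psi (pr y))).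
    have := ler_norm (dY (pr y') (iter (ip y').2 psi (pr y'))).
    rewrite mulrDl in h3; lra.
  - move=> [ep hc].
    rewrite -ep; apply: (le_trans (hiter _ _ _)).
    apply: ler_wpM2r => //.
    have : ((ip y).2 + 1 <= n)%N by lia.
    by rewrite -(ler_nat R) natrD; lra.
  - move=> [i0 i0'].
    case: hs => [_ e _]; case: hs' => [_ e' _].
    move: e e'; rewrite i0 i0' !add0n /= => -> ->.
    by rewrite subrr normr0; apply: mulr_ge0 => //; lra.
exists F, G; split; [|split].
- move=> x x'; have := hF x x'.
  have : 0 <= 2 * eps + (n%:R - 1) * delta by apply: addr_ge0; [lra | apply: mulr_ge0 => //; lra].
  rewrite !normP; lra.
- move=> y y'.
  have := hF (G y) (G y'); rewrite !FG.
  have := P2 y y'.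
  have := hpr2 y y'.
  rewrite !normP; lra.
- move=> x y.
  have h1 := hF x (G y); rewrite FG in h1.
  have h2 := P1 y.
  have h3 := met_lip hY (F x) (iter (ip y).2 psi (pr y)) (F x) y.
  have [_ h4] := hpr y.
  case: (hY) => [hn0 [hz [hs ht]]].
  have h5 := ht (iter (ip y).2 psi (pr y)) (pr y) y.
  have h6 : dX x (G y) - dY (F x) y = (dX x (G y) - dY (F x) (iter (ip y).2 psi (pr y))) + (dY (F x) (iter (ip y).2 psi (pr y)) - dY (F x) y) by ring.
  rewrite h6; apply: (le_trans (ler_normD _ _)).
  rewrite (hs _ (pr y)) (hs (pr y) y) (met0 hY) in h5 h3 *.
  have : 0 <= (n%:R - 1) * delta by apply: mulr_ge0 => //; lra.
  have : 0 <= (n%:R - 1) * delta by apply: mulr_ge0 => //; lra.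
  lra.
Qed.

Lemma dis_ge0 (R : realType) (X Y : Type) (dX : X -> X -> R) (dY : Y -> Y -> R) (x0 : X) f :
  (0 <= dis dX dY f)%E.
Proof.
apply: le_ereal_sup_tmp; exists (`|dX x0 x0 - dY (f x0) (f x0)|)%:E.
  by exists (x0, x0).
by rewrite lee_fin.
Qed.

Lemma dis_le (R : realType) (X Y : Type) (dX : X -> X -> R) (dY : Y -> Y -> R) f (K : R) :
  (forall x x', `|dX x x' - dY (f x) (f x')| <= K) -> (dis dX dY f <= K%:E)%E.
Proof. by move=> h; apply: ge_ereal_sup => _ [[x x'] _ <-]; rewrite lee_fin. Qed.

Lemma codis_le (R : realType) (X Y : Type) (dX : X -> X -> R) (dY : Y -> Y -> R) f g (K : R) :
  (forall x y, `|dX x (g y) - dY (f x) y| <= K) -> (codis dX dY f g <= K%:E)%E.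
Proof. by move=> h; apply: ge_ereal_sup => _ [[x y] _ <-]; rewrite lee_fin. Qed.

Lemma approx (R : realType) (X Y : Type) (dX : X -> X -> R) (dY : Y -> Y -> R) (a : R) (eta : R) :
  ereal_inf (range (fun f : X -> Y => dis dX dY f)) = a%:E -> 0 < eta ->
  exists f : X -> Y, forall x x', `|dX x x' - dY (f x) (f x')| <= a + eta.
Proof.
move=> ea he.
have : (ereal_inf (range (fun f : X -> Y => dis dX dY f)) < (a + eta)%:E)%E.
  by rewrite ea lte_fin; lra.
case/ereal_inf_lt => _ [f _ <-] hf; exists f => x x'.
have : ((`|dX x x' - dY (f x) (f x')|)%:E <= dis dX dY f)%E.
  by apply: ereal_sup_ubound; exists (x, x').
move=> h; have := le_lt_trans h hf; rewrite lte_fin; apply: ltW.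
Qed.

Lemma inf_le (R : realType) (X Y : Type) (dX : X -> X -> R) (dY : Y -> Y -> R) (K : R) F G :
  (forall x x', `|dX x x' - dY (F x) (F x')| <= K) ->
  (forall y y', `|dY y y' - dX (G y) (G y')| <= K) ->
  (forall x y, `|dX x (G y) - dY (F x) y| <= K) ->
  (ereal_inf (range (fun fg : (X -> Y) * (Y -> X) =>
     maxe (maxe (dis dX dY fg.1) (dis dY dX fg.2)) (codis dX dY fg.1 fg.2))) <= K%:E)%E.
Proof.
move=> h1 h2 h3; apply: ge_ereal_inf; exists (maxe (maxe (dis dX dY F) (dis dY dX G)) (codis dX dY F G)).
  by exists (F, G).
by rewrite !ge_max (@dis_le _ _ _ _ _ _ _ h1) (@dis_le _ _ _ _ _ _ _ h2) (@codis_le _ _ _ _ _ _ _ _ h3).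
Qed.

Lemma main_real (R : realType) (X Y : Type) (dX : X -> X -> R) (dY : Y -> Y -> R)
  (x0 : X) (y0 : Y) (hX : is_metric dX) (hY : is_metric dY)
  (eps : R) (heps : 0 <= eps) (sX : seq X) (sY : seq Y)
  (nX : is_eps_net dX eps sX) (nY : is_eps_net dY eps sY) (a b e : R)
  (ea : ereal_inf (range (fun f : X -> Y => dis dX dY f)) = a%:E)
  (eb : ereal_inf (range (fun g : Y -> X => dis dY dX g)) = b%:E) (he : 0 < e) :
  (ereal_inf (range (fun fg : (X -> Y) * (Y -> X) =>
     maxe (maxe (dis dX dY fg.1) (dis dY dX fg.2)) (codis dX dY fg.1 fg.2))) <=
   ((2 * (minn (size sX) (size sY)) - 1)%N%:R * Num.max a b
     + 4 * (minn (size sX) (size sY))%:R * eps + e)%:E)%E.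
Proof.
set n := minn (size sX) (size sY).
have nx1 : (1 <= size sX)%N by case: (nX x0) => a0 [h _]; case: (sX) h.
have ny1 : (1 <= size sY)%N by case: (nY y0) => a0 [h _]; case: (sY) h.
have n1 : (1 <= n)%N by rewrite /n; lia.
set c : R := n%:R - 1.
have c0 : 0 <= c by rewrite /c subr_ge0 ler1n.
have e2n : (2 * n - 1)%N%:R = 2 * c + 1 :> R.
  by rewrite natrB ?natrM /c; [lra | lia].
rewrite e2n.
set eta := e / (2 * c + 1).
have hc1 : 0 < 2 * c + 1 by lra.
have heta : 0 < eta by apply: divr_gt0.
have eeta : (2 * c + 1) * eta = e by rewrite /eta mulrC divfK //; lra.
have [f hf] := @approx _ _ _ _ _ _ _ ea heta.
have [g hg] := @approx _ _ _ _ _ _ _ eb heta.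
set M := Num.max a b.
have aM : a <= M by rewrite /M le_max lexx.
have bM : b <= M by rewrite /M le_max lexx orbT.
have hA : (forall x x', `|dX x x' - dY (f x) (f x')| <= M + eta).
  by move=> x x'; apply: (le_trans (hf x x')); lra.
have hB : (forall y y', `|dY y y' - dX (g y) (g y')| <= M + eta).
  by move=> y y'; apply: (le_trans (hg y y')); lra.
set K := (M + eta) + 4 * eps + c * ((M + eta) + (M + eta) + 2 * eps).
have KT : K <= (2 * c + 1) * M + 4 * (c + 1) * eps + e.
  rewrite /K -eeta.
  have h := mulr_ge0 c0 heps.
  have -> : c * (M + eta + (M + eta) + 2 * eps) = 2 * (c * M) + 2 * (c * eta) + 2 * (c * eps) by ring.
  have -> : (2 * c + 1) * M + 4 * (c + 1) * eps + (2 * c + 1) * eta = 2 * (c * M) + M + 4 * (c * eps) + 4 * eps + 2 * (c * eta) + eta by ring.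
  lra.
have -> : n%:R = c + 1 by rewrite /c; ring.
apply: (@le_trans _ _ K%:E); last by rewrite lee_fin.
case: (leqP (size sY) (size sX)) => hs.
- have en : n = size sY by rewrite /n; lia.
  have [F [G [h1 [h2 h3]]]] := @core _ _ _ _ _ hX hY _ heps _ nY y0 _ _ _ _ hA hB.
  rewrite -en -/c in h1 h2 h3.
  by apply: inf_le.
- have en : n = size sX by rewrite /n; lia.
  have [G [F [h1 [h2 h3]]]] := @core _ _ _ _ _ hY hX _ heps _ nX x0 _ _ _ _ hB hA.
  rewrite -en -/c in h1 h2 h3.
  apply: inf_le => //.
  move=> x y; have := h3 y x.
  case: hX => _ [_ [sx _]]; case: hY => _ [_ [sy _]].
  by rewrite sx sy -normrN opprB.
Qed.

Theorem mainTheorem8 (R : realType) (X Y : Type) (dX : X -> X -> R) (dY : Y -> Y -> R)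
  (x0 : X) (y0 : Y)
  (hX : is_metric dX) (hY : is_metric dY)
  (cX : metric_compact dX) (cY : metric_compact dY)
  (eps : R) (heps : 0 <= eps)
  (sX : seq X) (sY : seq Y)
  (uX : List.NoDup sX) (uY : List.NoDup sY)
  (nX : is_eps_net dX eps sX) (nY : is_eps_net dY eps sY) :
  let n := minn (size sX) (size sY) in
  (dGH dX dY <= ((2 * n - 1)%N%:R)%:E * dGH_hat dX dY + (2 * n%:R * eps)%:E)%E.
Proof.
cbv zeta; set n := minn (size sX) (size sY).
have nx1 : (1 <= size sX)%N by case: (nX x0) => a0 [h _]; case: (sX) h.
have ny1 : (1 <= size sY)%N by case: (nY y0) => a0 [h _]; case: (sY) h.
have n1 : (1 <= n)%N by rewrite /n; lia.
have c0 : (0 < (2 * n - 1)%N%:R :> R) by rewrite ltr0n; lia.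
rewrite /dGH /dGH_hat.
set I := ereal_inf _.
set a := ereal_inf (range (fun f : X -> Y => dis dX dY f)).
set b := ereal_inf (range (fun g : Y -> X => dis dY dX g)).
have a0 : (0 <= a)%E by apply: le_ereal_inf_tmp => _ [f _ <-]; apply: dis_ge0.
have b0 : (0 <= b)%E by apply: le_ereal_inf_tmp => _ [f _ <-]; apply: dis_ge0.
case ea: a a0 => [a'| |] a0'; last by [].
- case eb: b b0 => [b'| |] b0'; last by [].
  + have key : (I <= (2 * ((2 * n - 1)%N%:R * (2^-1 * Num.max a' b') + 2 * n%:R * eps))%:E)%E.
      apply/lee_addgt0Pr => e he.
      have := @main_real _ _ _ _ _ x0 y0 hX hY _ heps _ _ nX nY _ _ _ ea eb he.
      rewrite -/I -/n -EFinD => h; apply: (le_trans h); rewrite lee_fin; rewrite le_eqVlt; apply/orP; left; apply/eqP; by field.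
    rewrite -EFin_max -!EFinM -EFinD.
    apply: (le_trans (lee_wpmul2l _ key)); first by rewrite lee_fin; lra.
    by rewrite -EFinM lee_fin; rewrite le_eqVlt; apply/orP; left; apply/eqP; field.
  + rewrite maxey gt0_muley; last by rewrite lte_fin invr_gt0 ltr0n.
    by rewrite gt0_muley ?lte_fin // addye // leey.
- rewrite maxye gt0_muley; last by rewrite lte_fin invr_gt0 ltr0n.
  by rewrite gt0_muley ?lte_fin // addye // leey.
Qed.
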